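(* For every $\varepsilon > 0$, on any instance of MDMS the algorithm $\mathrm{GIST}(V, g, k, \varepsilon)$ outputs a set $S \subseteq V$ with $|S| \le k$ and $$f(S) \ge \left(\tfrac{1}{2} - \varepsilon\right)\cdot \mathrm{OPT},$$ and it uses $O(nk \log_{1+\varepsilon}(1/\varepsilon))$ value-oracle queries to $g$.
   Context: Let $V$ be a finite set of $n$ points in a metric space with metric $\mathrm{dist}$, and let $d_{\max} = \max_{u,v \in V}\mathrm{dist}(u,v)$. For $u \in V$ and $S \subseteq V$ let $\mathrm{dist}(u,S) = \min_{v \in S}\mathrm{dist}(u,v)$, with $\mathrm{dist}(u,\emptyset) = \infty$. The max-min diversity is $\mathrm{div}(S) = \min_{u,v \in S,\, u \ne v}\mathrm{dist}(u,v)$ if $|S| \ge 2$, and $\mathrm{div}(S) = d_{\max}$ if $|S| \le 1$. Let $g : 2^V \to \mathbb{R}_{\ge 0}$ be a nonnegative monotone submodular function (accessed via a value oracle), let $\lambda \ge 0$, let $k \ge 1$ be an integer, and let $f(S) = g(S) + \lambda\cdot \mathrm{div}(S)$. The MDMS problem is to maximize $f(S)$ subject to $S \subseteq V$, $|S| \le k$; $\mathrm{OPT}$ denotes the optimal value. $\mathrm{GreedyIndependentSet}(V,g,d,k)$: initialize $S \gets \emptyset$; for $i = 1,\dots,k$: let $C = \{v \in V\setminus S : \mathrm{dist}(v,S) \ge d\}$; if $C = \emptyset$ return $S$; otherwise pick $t \in \arg\max_{v \in C} \big(g(S\cup\{v\}) - g(S)\big)$ (ties broken arbitrarily) and set $S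 \gets S \cup\{t\}$. After the loop, return $S$. $\mathrm{GIST}(V,g,k,\varepsilon)$: set $S \gets \mathrm{GreedyIndependentSet}(V,g,0,k)$. Let $T = \{u,v\}$ be two points with $\mathrm{dist}(u,v) = d_{\max}$; if $f(T) > f(S)$ and $k \ge 2$, set $S \gets T$. Let $D = \{(1+\varepsilon)^i \cdot \varepsilon d_{\max}/2 : i \in \mathbb{Z}_{\ge 0},\ (1+\varepsilon)^i \le 2/\varepsilon\}$. For each $d \in D$: set $T \gets \mathrm{GreedyIndependentSet}(V,g,d,k)$ and if $f(T) \ge f(S)$ set $S \gets T$. Return $S$. *)

(* Defs.v *)
From HB Require Import structures.
From mathcomp Require Import all_boot all_order all_algebra.
From mathcomp Require Import reals.
From mathcomp Require exp.
Set Implicit Arguments. Unset Strict Implicit. Unset Printing Implicit Defensive.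
Import Order.TTheory GRing.Theory Num.Theory.
Local Open Scope ring_scope.

Section MDMS.
Variables (R : realType) (V : finType).

Definition is_metric (dist : V -> V -> R) : Prop :=
  [/\ forall x y, dist x y = 0 <-> x = y,
      forall x y, dist x y = dist y x &
      forall x y z, dist x z <= dist x y + dist y z].

Definition nonneg_fun (g : {set V} -> R) : Prop := forall A, 0 <= g A.
Definition monotone_fun (g : {set V} -> R) : Prop :=
  forall A B : {set V}, A \subset B -> g A <= g B.
Definition submodular (g : {set V} -> R) : Prop :=
  forall A B : {set V}, g (A :|: B) + g (A :&: B) <= g A + g B.

Variable dist : V -> V -> R.

(* d_max = max_{u,v} dist(u,v) (dist is nonnegative, so 0 is a neutral start) *)
Definition dmax : R := \big[Num.max/0]_(u : V) \big[Num.max/0]_(v : V) dist u v.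

(* div(S) = min_{u<>v in S} dist(u,v) if |S| >= 2, d_max otherwise.
   (every distance is <= d_max, so d_max is a neutral start for the min) *)
Definition div (S : {set V}) : R :=
  if (2 <= #|S|)%N then
    \big[Num.min/dmax]_(u in S) \big[Num.min/dmax]_(v in S | v != u) dist u v
  else dmax.

Variables (g : {set V} -> R) (lam : R) (k : nat).

Definition fobj (S : {set V}) : R := g S + lam * div S.

(* OPT = max_{|S| <= k} f(S)  (f >= 0, so 0 is a neutral start) *)
Definition OPT : R := \big[Num.max/0]_(S : {set V} | (#|S| <= k)%N) fobj S.

(* C = { v in V \ S : dist(v, S) >= d }, with dist(v, emptyset) = +oo;
   dist(v,S) = min_{u in S} dist(v,u) >= d  iff  every u in S has dist v u >= d *)
Definition cand (d : R) (S : {set V}) : {set V} :=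
  [set v | (v \notin S) && [forall u in S, d <= dist v u]].

Definition gain (S : {set V}) (v : V) : R := g (v |: S) - g S.

(* Nondeterministic execution of GreedyIndependentSet(V,g,d,k) (arbitrary
   tie-breaking).  [gis_exec d i S out q]: starting from current set S with
   i loop iterations remaining, the run returns [out] having made [q] value
   oracle queries to g.  Query accounting: an iteration with candidate set C
   evaluates g(S) and g(S ∪ {v}) for every v in C, i.e. |C|+1 queries;
   computing C itself only uses dist (no g queries). *)
Inductive gis_exec (d : R) : nat -> {set V} -> {set V} -> nat -> Prop :=
| gis_done S : gis_exec d 0 S S 0
| gis_stop i S : cand d S = set0 -> gis_exec d i.+1 S S 0
| gis_pick i S t out q :
    t \in cand d S ->
    (forall v, v \in cand d S -> gain S v <= gain S t) ->
    gis_exec d i (t |: S) out q ->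
    gis_exec d i.+1 S out (q + #|cand d S| + 1).

(* The loop "for each d in D: T <- GIS(V,g,d,k); if f(T) >= f(S) then S <- T",
   over the thresholds in the list ds (in that order).  Each comparison
   f(T) >= f(S) costs 2 queries (g(T), g(S)). *)
Inductive gist_loop : seq R -> {set V} -> {set V} -> nat -> Prop :=
| gl_nil S : gist_loop [::] S S 0
| gl_cons d ds S T qT out q :
    gis_exec d k set0 T qT ->
    gist_loop ds (if fobj S <= fobj T then T else S) out q ->
    gist_loop (d :: ds) S out (qT + 2 + q).

(* D = { (1+eps)^i * eps*dmax/2 : i in N, (1+eps)^i <= 2/eps }, enumerated in
   increasing order of i; N is the number of such i (they form a prefix of N
   since 1+eps > 1). *)
Definition gist_exec (eps : R) (S : {set V}) (q : nat) : Prop :=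
  exists (S0 : {set V}) (q0 : nat) (u v : V) (N : nat) (q1 : nat),
    [/\ gis_exec 0 k set0 S0 q0,
        dist u v = dmax,
        (forall i : nat, ((1 + eps) ^+ i <= 2 / eps) <-> (i < N)%N),
        gist_loop [seq (1 + eps) ^+ i * (eps * dmax / 2) | i <- iota 0 N]
          (if (fobj S0 < fobj [set u; v]) && (2 <= k)%N then [set u; v] else S0)
          S q1 &
        q = (q0 + 2 + q1)%N].

End MDMS.

(* Main.v *)
Require Import Defs.
From HB Require Import structures.
From mathcomp Require Import all_boot all_order all_algebra.
From mathcomp Require Import reals.
From mathcomp Require exp.
From mathcomp Require Import lra zify.
Import Order.TTheory GRing.Theory Num.Theory.
Local Open Scope ring_scope.
Set Implicit Arguments. Unset Strict Implicit. Unset Printing Implicit Defensive.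


Section Num.
Variable R : realType.

Lemma bernoulli (e : R) n : 0 <= e -> 1 + n%:R * e <= (1 + e) ^+ n.
Proof.
move=> e0; elim: n => [|n IH]; first by rewrite mul0r addr0 expr0.
rewrite exprS -natr1.
have h1 : 0 <= (1 + e) ^+ n by apply: exprn_ge0; lra.
have h2 : 0 <= n%:R * e :> R by apply: mulr_ge0.
nra.
Qed.

Lemma pow_mono (r : R) m n : 1 <= r -> (m <= n)%N -> r ^+ m <= r ^+ n.
Proof.
move=> r1 mn; rewrite -(subnKC mn) exprD.
have h1 := exprn_ege1 (n - m) r1.
have h2 : 0 <= r ^+ m by apply: exprn_ge0; lra.
nra.
Qed.

Lemma pow_unbounded (e x : R) : 0 < e -> exists n, x < (1 + e) ^+ n.
Proof.
move=> e0.
have [n hn] : exists n : nat, `|x| / e < n%:R.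
  exists (Num.Def.archi_bound (`|x| / e)); apply: archi_boundP.
  by apply: divr_ge0 => //; apply: ltW.
exists n; have hb := bernoulli n (ltW e0).
have : `|x| < n%:R * e by rewrite -ltr_pdivrMr.
have := ler_norm x; lra.
Qed.

Lemma N_ex (eps : R) : 0 < eps ->
  exists N, forall i, (1 + eps) ^+ i <= 2 / eps <-> (i < N)%N.
Proof.
move=> e0.
have hex : exists n, 2 / eps < (1 + eps) ^+ n by apply: pow_unbounded.
have hex' : exists n, (fun n => 2 / eps < (1 + eps) ^+ n) n by [].
case: (ex_minnP hex') => N hN hmin; exists N => i; split.
- move=> hi; rewrite ltnNge; apply/negP => Ni.
  have h1 : 1 <= 1 + eps by lra.
  have := pow_mono h1 Ni; lra.
- move=> iN; rewrite leNgt; apply/negP => hi.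
  by have := hmin i hi; rewrite leqNgt iN.
Qed.

Lemma layer (eps x : R) : 0 < eps -> 1 <= x ->
  exists i, (1 + eps) ^+ i <= x /\ x < (1 + eps) ^+ i.+1.
Proof.
move=> e0 x1; have [n hn] := pow_unbounded x e0.
elim: n hn => [|n IH] hn; first by move: hn; rewrite expr0; lra.
case: (lerP ((1 + eps) ^+ n) x) => h; first by exists n.
exact: IH.
Qed.
End Num.

Section GIS.
Variables (R : realType) (V : finType) (dist : V -> V -> R) (g : {set V} -> R).
Hypothesis hmet : is_metric dist.
Hypothesis hmono : monotone_fun g.
Hypothesis hsub : submodular g.

Lemma dist_sym x y : dist x y = dist y x.
Proof. by case: hmet. Qed.
Lemma dist_tri x y z : dist x z <= dist x y + dist y z.
Proof. by case: hmet. Qed.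
Lemma dist_xx x : dist x x = 0.
Proof. by case: hmet => h _ _; exact: (proj2 (h x x) erefl). Qed.
Lemma dist_eq0 x y : dist x y = 0 -> x = y.
Proof. by case: hmet => h _ _; exact: (proj1 (h x y)). Qed.
Lemma dist_ge0 x y : 0 <= dist x y.
Proof. have := dist_tri x y x; rewrite dist_xx (dist_sym y x); lra. Qed.

Lemma dist_le_dmax u v : dist u v <= dmax dist.
Proof.
rewrite /dmax.
apply: (le_trans _ (le_bigmax 0 (fun u => \big[Num.max/0]_(v : V) dist u v) u)).
exact: (le_bigmax 0 (fun v => dist u v) v).
Qed.

Lemma dmax_ge0 : 0 <= dmax dist.
Proof.
rewrite /dmax; elim/big_ind: _ => //.
- by move=> x y hx hy; rewrite le_max hx.
- move=> u _; elim/big_ind: _ => //.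
  + by move=> x y hx hy; rewrite le_max hx.
  + by move=> v _; apply: dist_ge0.
Qed.

Lemma div_ge d (S : {set V}) : d <= dmax dist ->
  (forall a b, a \in S -> b \in S -> a != b -> d <= dist a b) -> d <= div dist S.
Proof.
move=> hd hS; rewrite /div; case: ifP => // _.
apply: le_bigmin => // a aS; apply: le_bigmin => // b /andP[bS ba].
by apply: hS; rewrite // eq_sym.
Qed.

Lemma div_le (S : {set V}) a b : a \in S -> b \in S -> a != b -> div dist S <= dist a b.
Proof.
move=> aS bS ab; rewrite /div.
have h2 : (2 <= #|S|)%N.
  have <- : #|[set a; b]| = 2%N by rewrite cards2 ab.
  by apply: subset_leq_card; apply/subsetP => x; rewrite !inE => /orP[]/eqP->.
case: ifP => [_|]; last by rewrite h2.
rewrite (bigD1 a) //= ge_min; apply/orP; left.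
by rewrite (bigD1 b) /= ?bS ?(eq_sym b) ?ab // ge_min lexx.
Qed.



Lemma div_le_dmax (S : {set V}) : div dist S <= dmax dist.
Proof. rewrite /div; case: ifP => // _; exact: bigmin_le_id. Qed.

Lemma div_ge0 (S : {set V}) : 0 <= div dist S.
Proof. apply: div_ge; [exact: dmax_ge0|] => *; exact: dist_ge0. Qed.

Lemma gain_ge0 (S : {set V}) a : 0 <= gain g S a.
Proof. rewrite /gain subr_ge0; apply: hmono; exact: subsetUr. Qed.

Lemma gain_dim (S T : {set V}) a : S \subset T -> gain g T a <= gain g S a.
Proof.
move=> ST; case: (boolP (a \in T)) => aT.
  by rewrite /gain (setUidPr _) ?sub1set // subrr gain_ge0.
have h := hsub (a |: S) T.
have e1 : (a |: S) :|: T = a |: T by rewrite -setUA (setUidPr ST).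
have e2 : (a |: S) :&: T = S.
  apply/setP => x; rewrite !inE; case: (boolP (x == a)) => [/eqP->|] /=.
    by rewrite (negPf aT); case: (boolP (a \in S)) => // /(subsetP ST); rewrite (negPf aT).
  by move=> _; case: (boolP (x \in S)) => // /(subsetP ST) ->.
rewrite e1 e2 in h; rewrite /gain; lra.
Qed.

Lemma union_bound (T A : {set V}) : g (A :|: T) <= g T + \sum_(a in A) gain g T a.
Proof.
move: {2}#|A| (erefl #|A|) => n; elim: n A => [|n IH] A hA.
  by move/eqP: hA; rewrite cards_eq0 => /eqP->; rewrite set0U big_set0 addr0.
have /set0Pn [a aA] : A != set0 by rewrite -card_gt0 hA.
rewrite (big_setD1 _ aA) /=.
have hA' : #|A :\ a| = n by rewrite (cardsD1 a A) aA in hA; case: hA.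
have := IH _ hA'.
have eA : A :|: T = a |: ((A :\ a) :|: T) by rewrite setUA setD1K.
rewrite eA; have := gain_dim a (subsetUr (A :\ a) T); rewrite /gain; lra.
Qed.

Lemma exec_sub d i S out q : gis_exec dist g d i S out q -> S \subset out.
Proof.
elim=> // {}i {}S t {}out {}q _ _ _ IH; apply: subset_trans IH; exact: subsetUr.
Qed.

Lemma exec_card d i S out q : gis_exec dist g d i S out q -> (#|out| <= #|S| + i)%N.
Proof.
elim=> [{}S|{}i {}S _|{}i {}S t {}out {}q _ _ _ IH]; first by rewrite addn0.
  by rewrite leq_addr.
have := cardsU1 t S; lia.
Qed.

Lemma exec_q d i S out q : gis_exec dist g d i S out q -> (q <= i * (#|V| + 1))%N.
Proof.
elim=> // {}i {}S t {}out {}q _ _ _ IH.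
have := max_card (cand dist d S); lia.
Qed.

Lemma exec_sep d i S out q : gis_exec dist g d i S out q ->
  (forall a b, a \in S -> b \in S -> a != b -> d <= dist a b) ->
  (forall a b, a \in out -> b \in out -> a != b -> d <= dist a b).
Proof.
elim=> // {}i {}S t {}out {}q tC _ _ IH hS; apply: IH.
move: tC; rewrite inE => /andP[tS /forall_inP ht].
move=> a b; rewrite !inE => /orP[/eqP->|aS] /orP[/eqP->|bS] //; first by rewrite eqxx.
- by move=> _; apply: ht.
- by move=> _; rewrite dist_sym; apply: ht.
- exact: hS.
Qed.

Lemma exec_ex d i S : exists out q, gis_exec dist g d i S out q.
Proof.
elim: i S => [|i IH] S; first by exists S, 0%N; constructor.
case: (eqVneq (cand dist d S) set0) => [h|/set0Pn [t0 t0C]].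
  by exists S, 0%N; apply: gis_stop.
set t := [arg max_(t > t0 in cand dist d S) gain g S t]%O.
have [tC tmax] : t \in cand dist d S /\ forall v, v \in cand dist d S -> gain g S v <= gain g S t.
  rewrite /t; case: (arg_maxP (fun v => gain g S v) t0C) => x xC xm; split => //.
have [out [q hq]] := IH (t |: S).
by exists out, (q + #|cand dist d S| + 1)%N; exact: (gis_pick tC tmax hq).
Qed.

Lemma greedy d i S out q : 0 <= d -> gis_exec dist g d i S out q ->
  forall A : {set V}, A \subset cand dist d S ->
  (forall a b, a \in A -> b \in A -> a != b -> 2 * d <= dist a b) ->
  (#|A| <= i)%N ->
  \sum_(a in A) gain g out a <= g out - g S.
Proof.
move=> d0; elim=> [{}S|{}i {}S hC|{}i {}S t {}out {}q tC tmax hex IH] A AC Asep Acard.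
- by move: Acard; rewrite leqn0 cards_eq0 => /eqP->; rewrite big_set0 subrr.
- by move: AC; rewrite hC subset0 => /eqP->; rewrite big_set0 subrr.
- have Sout : S \subset out by apply: subset_trans (exec_sub hex); exact: subsetUr.
  case: (eqVneq A set0) => [->|An0].
    by rewrite big_set0 subr_ge0; apply: hmono.
  have [a0 a0A a0r] : exists2 a0, a0 \in A & A :\ a0 \subset cand dist d (t |: S).
    have key : forall x, x \in cand dist d S -> x \notin cand dist d (t |: S) ->
        x = t \/ dist x t < d.
      move=> x; rewrite !inE => /andP[xS /forall_inP hx].
      rewrite negb_and negbK; case: (eqVneq x t) => [->|xt]; first by left.
      rewrite /= (negPf xS) /= => /forall_inP hn; right.
      case: (ltP (dist x t) d) => // hle; exfalso; apply: hn => u.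
      by rewrite !inE => /orP[/eqP->|]; [|apply: hx].
    case: (boolP [exists a in A, a \notin cand dist d (t |: S)]).
      move=> /exists_inP [a0 a0A a0n]; exists a0 => //.
      apply/subsetP => b; rewrite in_setD1 => /andP[ba0 bA].
      apply/negPn/negP => bn.
      have hb := key b (subsetP AC b bA) bn.
      have ha := key a0 (subsetP AC a0 a0A) a0n.
 have ab0 : a0 != b by rewrite eq_sym.
      have hs := Asep a0 b a0A bA ab0.
      have tri := dist_tri a0 t b.
      have sy := dist_sym t b.
      case: ha => [ea|ha]; case: hb => [eb|hb].
      + by move: ba0; rewrite ea eb eqxx.
      + by move: hs; rewrite ea dist_sym; lra.
      + by move: hs; rewrite eb; lra.
      + lra.
    move=> /exists_inPn hall; have /set0Pn [a0 a0A] := An0; exists a0 => //.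
    apply/subsetP => b; rewrite in_setD1 => /andP[_ bA]; move: (hall b bA); by rewrite negbK.
  rewrite (big_setD1 _ a0A) /=.
  have IH' := IH (A :\ a0) a0r
    (fun a b ha hb => Asep a b (subsetP (subD1set A a0) a ha) (subsetP (subD1set A a0) b hb)).
  have hc : (#|A :\ a0| <= i)%N by move: Acard; rewrite (cardsD1 a0 A) a0A; lia.
  have := IH' hc.
  have h1 := gain_dim a0 Sout.
  have h2 := tmax a0 (subsetP AC a0 a0A).
  rewrite /gain in h1 h2 *; lra.
Qed.

Lemma cand_set0 d : cand dist d set0 = setT.
Proof. by apply/setP => x; rewrite !inE; apply/forall_inP => u; rewrite inE. Qed.

Lemma greedy_half d T q (A : {set V}) (k : nat) : nonneg_fun g -> 0 <= d ->
  gis_exec dist g d k set0 T q -> (#|A| <= k)%N ->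
  (forall a b, a \in A -> b \in A -> a != b -> 2 * d <= dist a b) ->
  g A <= 2 * g T.
Proof.
move=> gnn d0 hex Ak Asep.
have := greedy d0 hex (A := A); rewrite cand_set0 subsetT => /(_ isT Asep Ak) h1.
have h2 := union_bound T A.
have h3 : g A <= g (A :|: T) by apply: hmono; exact: subsetUl.
have h4 := gnn set0; lra.
Qed.

Variables (lam : R) (k : nat).
Hypothesis hlam : 0 <= lam.
Hypothesis hgnn : nonneg_fun g.

Local Notation f := (fobj dist g lam).

Lemma f_ge0 S : 0 <= f S.
Proof. by rewrite /fobj; apply: addr_ge0; [exact: hgnn | exact: mulr_ge0 hlam (div_ge0 S)]. Qed.

Lemma loop_props ds S out q : gist_loop dist g lam k ds S out q ->
  [/\ f S <= f out,
      forall d, d \in ds -> exists T qT, gis_exec dist g d k set0 T qT /\ f T <= f out,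
      (#|S| <= k)%N -> (#|out| <= k)%N &
      (q <= size ds * (k * (#|V| + 1) + 2))%N].
Proof.
elim=> [{}S|d {}ds {}S T qT {}out {}q hT hl [IH1 IH2 IH3 IH4]].
  by split => // d; rewrite in_nil.
have hS' : f S <= f (if f S <= f T then T else S) by case: ifP.
have hT' : f T <= f (if f S <= f T then T else S).
  by case: ifP => // /negbT; rewrite -ltNge => /ltW.
split.
- exact: le_trans hS' IH1.
- move=> d'; rewrite in_cons => /orP[/eqP->|]; last exact: IH2.
  by exists T, qT; split => //; apply: le_trans hT' IH1.
- move=> Sk; apply: IH3; case: ifP => // _.
  by have := exec_card hT; rewrite cards0.
- have := exec_q hT; rewrite /= mulSn.
  move: (k * (#|V| + 1))%N IH4 => X. lia.
Qed.

Lemma loop_ex ds S : exists out q, gist_loop dist g lam k ds S out q.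
Proof.
elim: ds S => [|d ds IH] S; first by exists S, 0%N; constructor.
have [T [qT hT]] := exec_ex d k set0.
have [out [q hq]] := IH (if f S <= f T then T else S).
by exists out, (qT + 2 + q)%N; apply: gl_cons hT hq.
Qed.

Lemma OPT_ge0 : 0 <= OPT dist g lam k.
Proof.
rewrite /OPT; elim/big_ind: _ => //.
- by move=> x y hx hy; rewrite le_max hx.
- by move=> A _; apply: f_ge0.
Qed.

Lemma approx eps S q : (1 <= k)%N -> 0 < eps -> gist_exec dist g lam k eps S q ->
  (#|S| <= k)%N /\ (1 / 2 - eps) * OPT dist g lam k <= f S.
Proof.
move=> k1 e0 [S0 [q0 [u [v [N [q1 [h0 huv hN hl _]]]]]]].
set S1 := if _ then _ else _ in hl.
have [l1 l2 l3 _] := loop_props hl.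
split.
  apply: l3; rewrite /S1; case: ifP => [/andP[_ k2]|_].
    by rewrite cards2; case: (u != v) => //; apply: leq_trans k2.
  by have := exec_card h0; rewrite cards0.
have fS0 : f S0 <= f S.
  apply: le_trans l1; rewrite /S1; case: ifP => // /andP[/ltW] //.
have fpair : (2 <= k)%N -> f [set u; v] <= f S.
  move=> k2; apply: le_trans l1; rewrite /S1; case: ifP => // /negbT.
  by rewrite negb_and k2 orbF -leNgt.
set r := 1 + eps.
set dm := dmax dist.
have dm0 : 0 <= dm := dmax_ge0.
have fT : forall i, (i < N)%N -> exists T qT,
    gis_exec dist g (r ^+ i * (eps * dm / 2)) k set0 T qT /\ f T <= f S.
  move=> i iN; apply: l2; apply: map_f; by rewrite mem_iota.
have fS_ge0 := f_ge0 S.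
case: (lerP (1 / 2) eps) => he.
  have := OPT_ge0; nra.
have key : forall A : {set V}, (#|A| <= k)%N -> (1 / 2 - eps) * f A <= f S.
  move=> A Ak; rewrite [f A]/fobj.
  set gA := g A; set dA := div dist A.
  have gA0 : 0 <= gA by apply: hgnn.
  have dA0 : 0 <= dA by apply: div_ge0.
  have dAm : dA <= dm by apply: div_le_dmax.
  case: (lerP (eps * dm) dA) => hd.
  -
    have [i [iN hi1 hi2]] : exists i, [/\ (i < N)%N,
        r ^+ i * (eps * dm / 2) <= dA / 2 &
        dA / 2 <= r * (r ^+ i * (eps * dm / 2))].
      case: (eqVneq dm 0) => [dm_0|dmn0].
        have dA_0 : dA = 0 by lra.
        exists 0%N; split.
        + by apply/hN; rewrite expr0 ler_pdivlMr //; lra.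
        + by rewrite dm_0 dA_0 !(mulr0, mul0r).
        + by rewrite dm_0 dA_0 !(mulr0, mul0r).
      have dmp : 0 < dm by rewrite lt_def dmn0.
      have edp : 0 < eps * dm by apply: mulr_gt0.
      have x1 : 1 <= dA / (eps * dm) by rewrite ler_pdivlMr // mul1r.
      have [i [hi1 hi2]] := layer e0 x1.
      have hr0 : 0 <= r ^+ i by apply: exprn_ge0; rewrite /r; lra.
      exists i; split.
      + apply/hN; apply: (le_trans hi1).
        rewrite ler_pdivrMr // mulrA divfK ?gt_eqF //; lra.
      + move: hi1; rewrite ler_pdivlMr // => hi1; lra.
      + move: hi2; rewrite ltr_pdivrMr // exprS -/r => hi2.
        have -> : r * (r ^+ i * (eps * dm / 2)) = r * r ^+ i * (eps * dm) / 2 by rewrite !mulrA.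
        lra.
    have [T [qT [hT fTS]]] := fT i iN.
    set d := r ^+ i * (eps * dm / 2) in hi1 hi2 hT.
    have d0 : 0 <= d.
      rewrite /d; apply: mulr_ge0; first by apply: exprn_ge0; rewrite /r; lra.
      apply: divr_ge0 => //; apply: mulr_ge0 => //; exact: ltW.
    have hgT : gA <= 2 * g T.
      apply: (greedy_half hgnn d0 hT Ak) => a b aA bA ab.
      have := div_le aA bA ab; rewrite -/dA; lra.
    have hdT : d <= div dist T.
      apply: div_ge; first by rewrite -/dm; lra.
      apply: (exec_sep hT) => a b; by rewrite inE.
    have hfT : gA / 2 + lam * d <= f S.
      apply: le_trans fTS; rewrite /fobj.
      have := ler_wpM2l hlam hdT; lra.
    have h1 : (1 / 2 - eps) * dA <= d.
      have : dA <= 2 * r * d by move: hi2; rewrite /r; lra.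
      rewrite /r => h; nra.
    have h2 := ler_wpM2l hlam h1.
    have h3 : 0 <= eps * gA by apply: mulr_ge0 => //; exact: ltW.
    lra.
  -
    have A2 : (2 <= #|A|)%N.
      rewrite leqNgt; apply/negP => hA.
      move: hd; rewrite /dA /div leqNgt hA /= -/dm; nra.
    have k2 : (2 <= k)%N by apply: leq_trans Ak.
    have dmp : 0 < dm by nra.
    have uv : u != v.
      by apply/eqP => e; move: huv; rewrite e dist_xx -/dm => e'; lra.
    have hdp : dm <= div dist [set u; v].
      apply: div_ge => // a b; rewrite !inE => /orP[]/eqP-> /orP[]/eqP->;
        rewrite ?eqxx // => _; by rewrite ?huv // dist_sym huv.
    have hfp : lam * dm <= f S.
      apply: le_trans (fpair k2); rewrite /fobj.
      have := ler_wpM2l hlam hdp; have := hgnn [set u; v]; lra.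
    have hS0 : gA <= 2 * g S0.
      have d0 : (0 : R) <= 0 by [].
      apply: (greedy_half hgnn d0 h0 Ak) => a b _ _ _; rewrite mulr0; exact: dist_ge0.
    have hf0 : gA / 2 <= f S.
      apply: le_trans fS0; rewrite /fobj.
      have := mulr_ge0 hlam (div_ge0 S0); lra.
    have hQ : lam * dA <= lam * (eps * dm) by apply: ler_wpM2l => //; exact: ltW.
    have hQ0 : 0 <= lam * dA by apply: mulr_ge0.
    have : lam * dA <= eps * f S.
      apply: (le_trans hQ); rewrite mulrCA; apply: ler_wpM2l; [exact: ltW|done].
    nra.
have hc : 0 < 1 / 2 - eps by lra.
rewrite -ler_pdivlMl //.
apply: bigmax_le => [|A Ak]; first by apply: mulr_ge0 => //; rewrite invr_ge0; exact: ltW.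
by rewrite ler_pdivlMl //; apply: key.
Qed.

Lemma exists_run eps : 0 < eps -> (0 < #|V|)%N -> exists S q, gist_exec dist g lam k eps S q.
Proof.
move=> e0 /card_gt0P [u0 _].
set F := fun u => \big[Num.max/0]_(v : V) dist u v.
set u1 := [arg max_(u > u0) F u]%O.
set v1 := [arg max_(v > u0) dist u1 v]%O.
have hF : forall u, F u <= F u1.
  move=> u; rewrite /u1; case: (arg_maxP F (isT : predT u0)) => x _ hx; exact: hx.
have hv : forall v, dist u1 v <= dist u1 v1.
  move=> v; rewrite /v1; case: (arg_maxP (fun v => dist u1 v) (isT : predT u0)) => x _ hx; exact: hx.
have huv : dist u1 v1 = dmax dist.
  apply/le_anti; rewrite dist_le_dmax /=.
  apply: bigmax_le => [|u _]; first exact: dist_ge0.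
  apply: (le_trans (hF u)); apply: bigmax_le => [|v _]; [exact: dist_ge0 | exact: hv].
have [S0 [q0 h0]] := exec_ex 0 k set0.
have [N hN] := N_ex e0.
have [out [q1 hl]] := loop_ex [seq (1 + eps) ^+ i * (eps * dmax dist / 2) | i <- iota 0 N]
  (if (f S0 < f [set u1; v1]) && (2 <= k)%N then [set u1; v1] else S0).
by exists out, (q0 + 2 + q1)%N, S0, q0, u1, v1, N, q1.
Qed.

Lemma query_bound eps S q : (1 <= k)%N -> gist_exec dist g lam k eps S q ->
  exists N, [/\ (0 < #|V|)%N, (q <= 4 * (#|V| * k) * N.+1)%N &
    forall i, (i < N)%N -> (1 + eps) ^+ i <= 2 / eps].
Proof.
move=> k1 [S0 [q0 [u [v [N [q1 [h0 huv hN hl ->]]]]]]].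
exists N; have n1 : (0 < #|V|)%N by apply/card_gt0P; exists u.
split => //; last by move=> i /hN.
have [_ _ _ hq1] := loop_props hl.
rewrite size_map size_iota in hq1.
have hq0 := exec_q h0.
have kM : (k <= #|V| * k)%N by apply: leq_pmull.
have M1 : (1 <= #|V| * k)%N by apply: leq_trans kM.
have hkn : (k * (#|V| + 1) = #|V| * k + k)%N by rewrite mulnDr muln1 mulnC.
rewrite hkn in hq0 hq1.
have h1 : (N * k <= N * (#|V| * k))%N by apply: leq_mul.
have h2 : (N <= N * (#|V| * k))%N by rewrite -{1}(muln1 N); apply: leq_mul.
move: hq1; rewrite mulnDr mulnDr => hq1.
move: (#|V| * k)%N kM M1 h1 h2 hq0 hq1 => M *; nia.
Qed.
End GIS.
Theorem theorem3p1 (R : realType) :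
  (* approximation guarantee (and termination / feasibility) for every eps > 0 *)
  (forall (V : finType) (dist : V -> V -> R) (g : {set V} -> R) (lam : R)
          (k : nat) (eps : R),
     is_metric dist -> nonneg_fun g -> monotone_fun g -> submodular g ->
     0 <= lam -> (1 <= k)%N -> 0 < eps ->
     ((0 < #|V|)%N -> exists S q, gist_exec dist g lam k eps S q) /\
     (forall S q, gist_exec dist g lam k eps S q ->
        (#|S| <= k)%N /\ (1 / 2 - eps) * OPT dist g lam k <= fobj dist g lam S))
  /\
  (* query complexity O(n k log_{1+eps}(1/eps)), uniformly in the instance,
     as eps -> 0 *)
  (exists (C eps0 : R), 0 < C /\ 0 < eps0 /\
     forall (V : finType) (dist : V -> V -> R) (g : {set V} -> R) (lam : R)
            (k : nat) (eps : R),
       is_metric dist -> nonneg_fun g -> monotone_fun g -> submodular g ->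
       0 <= lam -> (1 <= k)%N -> 0 < eps -> eps < eps0 ->
       forall S q, gist_exec dist g lam k eps S q ->
         (q%:R : R) <= C * (#|V|)%:R * k%:R * (exp.ln (1 / eps) / exp.ln (1 + eps))).
Proof.
split.
  move=> V dist g lam k eps hmet hgnn hmono hsub hlam k1 e0; split.
    exact: (exists_run g hmet lam k e0).
  move=> S q hex; exact: (approx hmet hmono hsub hlam hgnn k1 e0 hex).
exists 16, (1 / 2); split; first by lra. split; first by lra.
move=> V dist g lam k eps hmet hgnn hmono hsub hlam k1 e0 e1 S q hex.
have [N [n1 hq hN]] := query_bound hlam k1 hex.
set a := exp.ln (1 / eps); set b := exp.ln (1 + eps).
have b0 : 0 < b by apply: exp.ln_gt0; lra.
have einv : 2 <= 1 / eps by rewrite ler_pdivlMr //; lra.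
have p1 : (1 + eps) \is Num.pos by rewrite posrE; lra.
have p2 : (1 / eps) \is Num.pos by rewrite posrE; lra.
have p3 : (2 : R) \is Num.pos by rewrite posrE.
have ab : b <= a by rewrite /a /b exp.ler_ln //; lra.
have a2 : exp.ln 2 <= a by rewrite /a exp.ler_ln.
have ln20 : 0 <= exp.ln (2 : R) by apply: ltW; apply: exp.ln_gt0; lra.
set L := a / b.
have L1 : 1 <= L by rewrite /L ler_pdivlMr // mul1r.
have hNL : (N.+1)%:R <= 4 * L :> R.
  case: N hN hq => [|M] hN hq; first by lra.
  have hM := hN M (ltnSn M).
  have rp : 0 < (1 + eps) ^+ M by apply: exprn_gt0; lra.
  have ep : 0 < 2 / eps by apply: divr_gt0.
  have q1 : (1 + eps) ^+ M \is Num.pos by rewrite posrE.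
  have q2 : (2 / eps) \is Num.pos by rewrite posrE.
  move: hM; rewrite -(exp.ler_ln q1 q2) exp.lnXn; last by lra.
  have e2 : 2 / eps = 2 * (1 / eps) by rewrite mul1r.
  rewrite e2 (exp.lnM p3 p2).
  rewrite -/a -/b -[b *+ M]mulr_natl => hM.
  have hM2 : M%:R <= 2 * L.
    rewrite -(ler_pM2r b0).
    have -> : 2 * L * b = 2 * a by rewrite /L -mulrA divfK ?gt_eqF.
    lra.
  rewrite -natr1 -natr1; lra.
have nk0 : 0 <= (#|V| * k)%:R :> R by [].
have h2 : q%:R <= (4 * (#|V| * k) * N.+1)%:R :> R by rewrite ler_nat.
have L0 : 0 <= L by lra.
have h1 : (#|V| * k)%:R * (N.+1)%:R <= (#|V| * k)%:R * (4 * L) :> R by apply: ler_wpM2l.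
rewrite !natrM in h1 h2 nk0.
have -> : 16 * #|V|%:R * k%:R * (exp.ln (1 / eps) / exp.ln (1 + eps)) = 16 * (#|V|%:R * k%:R) * L.
  by rewrite /L /a /b !mulrA.
lra.
Qed.
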